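(* Every countably infinite ${\le}5$-set-homogeneous 4-hypergraph has an automorphism group which is 2-transitive on its vertex set.
   Context: A 4-hypergraph is a pair $(M,E)$ with $M$ countable and $E$ a set of 4-element subsets of $M$ (edges). It is ${\le}5$-set-homogeneous if for each $s\le 5$, whenever $U,V\subseteq M$ with $|U|=|V|=s$ carry isomorphic induced subhypergraphs there is $g\in\mathrm{Aut}(M,E)$ with $U^g=V$. A permutation group is 2-transitive if transitive on ordered pairs of distinct points. *)

(* Defs.v *)
From mathcomp Require Import all_boot.
From mathcomp Require Import classical_sets functions.
Set Implicit Arguments. Unset Strict Implicit. Unset Printing Implicit Defensive.
Local Open Scope classical_set_scope.

Definition nset (M : Type) (n : nat) (S : set M) : Prop :=
  exists f : 'I_n -> M, injective f /\ S = range f.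

Definition countably_infinite (M : Type) : Prop :=
  exists f : nat -> M, bijective f.

Definition hypergraph4 (M : Type) (E : set (set M)) : Prop :=
  forall S, E S -> nset 4 S.

Definition is_aut (M : Type) (E : set (set M)) (g : M -> M) : Prop :=
  bijective g /\ forall S : set M, E S <-> E (g @` S).

Definition induced_iso (M : Type) (E : set (set M)) (U V : set M) : Prop :=
  exists h : M -> M,
    (forall x y, U x -> U y -> h x = h y -> x = y) /\
    h @` U = V /\
    (forall S : set M, S `<=` U -> (E S <-> E (h @` S))).

Definition le_set_homogeneous (M : Type) (E : set (set M)) (k : nat) : Prop :=
  forall s : nat, s <= k -> forall U V : set M,
    nset s U -> nset s V -> induced_iso E U V ->
    exists g : M -> M, is_aut E g /\ g @` U = V.

Definition aut_two_transitive (M : Type) (E : set (set M)) : Prop :=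
  forall a b c d : M, a <> b -> c <> d ->
    exists g : M -> M, is_aut E g /\ g a = c /\ g b = d.

(* Main.v *)
Require Import Defs.
From mathcomp Require Import all_boot.
From mathcomp Require Import boolp classical_sets functions.
From mathcomp Require Import zify.
Set Implicit Arguments. Unset Strict Implicit. Unset Printing Implicit Defensive.
Local Open Scope classical_set_scope.

Definition bitn (P i : nat) : bool := odd (P %/ 2 ^ i).
Arguments bitn : simpl never.
Definition popc (P : nat) : nat := count (bitn P) (iota 0 5).
Arguments popc : simpl never.

Definition perm_check : bool :=
  all (fun P => all (fun Q => (popc P == popc Q) ==>
     has (fun s => all (fun i => bitn Q (nth 0 s i) == bitn P i) (iota 0 5)) (permutations (iota 0 5)))
   (iota 0 32)) (iota 0 32).

Lemma perm_check_ok : perm_check.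
Proof. by vm_compute. Qed.

Lemma perm_exists P Q : P < 32 -> Q < 32 -> popc P = popc Q ->
  exists2 s, perm_eq s (iota 0 5) & forall i, i < 5 -> bitn Q (nth 0 s i) = bitn P i.
Proof.
move=> hP hQ e; have := perm_check_ok; rewrite /perm_check.
move/allP => /(_ P); rewrite mem_iota add0n => /(_ hP) /allP /(_ Q).
rewrite mem_iota add0n => /(_ hQ).
rewrite e eqxx implyTb => /hasP [s]; rewrite mem_permutations => ps /allP h.
by exists s => // i lt; apply/eqP; apply: h; rewrite mem_iota.
Qed.

Definition optsat (f : nat -> bool) (x : option nat) := if x is Some P then f P else false.
Definition satN a b (s : bool) P := (bitn P a == s) && (bitn P b == ~~ s).
Definition satA a P := bitn P a != bitn P a.+1.
Definition Npairs := [:: (0,2); (0,3); (0,4); (1,3); (1,4); (2,4)].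
Definition cond_ok (o : seq (option nat)) : bool :=
  all (fun ab => all (fun s => has (optsat (satN ab.1 ab.2 s)) o) [:: true; false]) Npairs &&
  all (fun a => has (optsat (satA a)) o) (iota 0 4).
Definition cand k := None :: [seq Some P | P <- [seq P <- iota 0 32 | popc P == k]].
Definition big_check : bool :=
  all (fun a0 => all (fun a1 => all (fun a2 => all (fun a3 => all (fun a4 => all (fun a5 =>
    ~~ cond_ok [:: a0; a1; a2; a3; a4; a5]) (cand 5)) (cand 4)) (cand 3)) (cand 2)) (cand 1)) (cand 0).

Lemma big_check_ok : big_check.
Proof. by vm_compute. Qed.

Lemma Npairs_ok : all (fun ab => (ab.1.+2 <= ab.2) && (ab.2 < 5)) Npairs.
Proof. by []. Qed.

Lemma popc_le P : popc P < 6.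
Proof. by rewrite /popc ltnS (leq_trans (count_size _ _)) ?size_iota. Qed.

Lemma finite_contra (Real : nat -> Prop) :
  (forall P, Real P -> P < 32) ->
  (forall P Q, Real P -> Real Q -> popc P = popc Q -> P = Q) ->
  (forall a b, a.+2 <= b -> b < 5 -> forall s : bool,
      exists P, [/\ Real P, bitn P a = s & bitn P b = ~~ s]) ->
  (forall a, a < 4 -> exists P, Real P /\ bitn P a != bitn P a.+1) -> False.
Proof.
move=> hB hU hN hA.
pose rb P := `[< Real P >].
pose F k := ohead [seq P <- iota 0 32 | rb P && (popc P == k)].
have Fc k : F k \in cand k.
  rewrite /F /cand; case e: [seq P <- iota 0 32 | rb P && (popc P == k)] => [|P l].
    by rewrite inE.
  have : P \in [seq P <- iota 0 32 | rb P && (popc P == k)] by rewrite e inE eqxx.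
  rewrite mem_filter => /andP [/andP [_ pk] Pi].
  rewrite inE; apply/orP; right; apply: map_f; by rewrite mem_filter pk Pi.
have FR P : Real P -> F (popc P) = Some P.
  move=> RP; rewrite /F.
  have : P \in [seq Q <- iota 0 32 | rb Q && (popc Q == popc P)].
    rewrite mem_filter mem_iota add0n leq0n (hB _ RP) eqxx !andbT; apply/asboolP.
    exact: RP.
  have := filter_all (fun Q => rb Q && (popc Q == popc P)) (iota 0 32).
  case: [seq Q <- iota 0 32 | rb Q && (popc Q == popc P)] => [|Q l] //=.
  move=> /andP [/andP [/asboolP RQ /eqP pQ] _] _.
  by rewrite (hU _ _ RQ RP pQ).
have inO P : Real P -> Some P \in [:: F 0; F 1; F 2; F 3; F 4; F 5].
  move=> RP; change ([:: F 0; F 1; F 2; F 3; F 4; F 5]) with (map F (iota 0 6)).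
  by rewrite -(FR P RP); apply: map_f; rewrite mem_iota popc_le.
have := big_check_ok; rewrite /big_check.
move/allP/(_ _ (Fc 0)) /allP/(_ _ (Fc 1)) /allP/(_ _ (Fc 2)) /allP/(_ _ (Fc 3))
  /allP/(_ _ (Fc 4)) /allP/(_ _ (Fc 5)) /negP; apply.
rewrite /cond_ok; apply/andP; split.
  apply/allP => ab hab; have /andP [h1 h2] := allP Npairs_ok ab hab.
  apply/allP => s _; have [P [RP e1 e2]] := hN _ _ h1 h2 s.
  apply/hasP; exists (Some P); first exact: (inO P RP).
  by rewrite /optsat /satN e1 e2 !eqxx.
apply/allP => a; rewrite mem_iota add0n => ha.
have [P [RP e]] := hA a ha.
by apply/hasP; exists (Some P); first exact: (inO P RP).
Qed.

Section Gen.
Variable T : eqType.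

Definition ls (l : seq T) : set T := [set x | x \in l].

Lemma ls_eqP (l1 l2 : seq T) : ls l1 = ls l2 <-> l1 =i l2.
Proof.
split=> [H x|H]; last by rewrite predeqE => x; rewrite /ls /= H.
have := congr1 (fun A => A x) H; rewrite /ls /= => e.
by apply/idP/idP => h; [rewrite -e | rewrite e].
Qed.

Lemma nset_ls (l : seq T) : uniq l -> nset (size l) (ls l).
Proof.
move=> u; exists (tnth (in_tuple l)); split; first exact/tuple_uniqP.
rewrite predeqE => x; split.
  move=> h; have /tuple.tnthP [i ->] : x \in in_tuple l by []. by exists i.
by case=> i _ <-; apply: mem_tnth.
Qed.

Lemma nset_list n (S : set T) : nset n S ->
  exists l, [/\ uniq l, size l = n & S = ls l].
Proof.
case=> f [inj ->]; exists (map f (enum 'I_n)); split.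
- by rewrite map_inj_uniq ?enum_uniq.
- by rewrite size_map size_enum_ord.
rewrite predeqE => x; split; first by case=> i _ <-; apply: map_f; rewrite mem_enum.
by case/mapP=> i _ ->; exists i.
Qed.

Lemma ls_size (l1 l2 : seq T) : ls l1 = ls l2 -> uniq l1 -> uniq l2 -> size l1 = size l2.
Proof.
move/ls_eqP=> e u1 u2; apply: perm_size; exact: uniq_perm.
Qed.

Lemma nset_size n (l : seq T) : uniq l -> nset n (ls l) -> size l = n.
Proof.
move=> u /nset_list [l' [u' <- e]]; exact: ls_size.
Qed.

Lemma nset_sub n (S : set T) (l : seq T) : nset n S -> S `<=` ls l -> n <= size l.
Proof.
case/nset_list=> l' [u' <- ->] sub; apply: uniq_leq_size => // x; exact: sub.
Qed.

Lemma image_ls (g : T -> T) (l : seq T) : g @` ls l = ls (map g l).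
Proof.
rewrite predeqE => y; split; first by case=> x h <-; apply: map_f.
by case/mapP=> x h ->; exists x.
Qed.

Lemma nset_image n (S : set T) (g : T -> T) :
  (forall x y, S x -> S y -> g x = g y -> x = y) -> nset n S -> nset n (g @` S).
Proof.
move=> ig [f [inj eS]]; subst S; exists (g \o f); split.
  by move=> i j /= h; apply: inj; apply: ig => //; exact: imageP.
by rewrite image_comp.
Qed.

Definition filt (S : set T) (X : seq T) := [seq x <- X | `[< S x >]].

Lemma ls_filt (S : set T) X : S `<=` ls X -> S = ls (filt S X).
Proof.
move=> sub; rewrite predeqE => x; rewrite /ls /filt /= mem_filter; split.
  by move=> h; rewrite (asboolT h); apply: sub.
by case/andP=> /asboolP.
Qed.

Definition rem_at (i : nat) (l : seq T) := take i l ++ drop i.+1 l.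

Lemma mem_rem_at (l : seq T) i x : uniq l -> i < size l ->
  (x \in rem_at i l) = (x \in l) && (x != nth x l i).
Proof.
move=> u lt; rewrite /rem_at.
set y := nth x l i.
have e : l = take i l ++ y :: drop i.+1 l by rewrite /y -drop_nth // cat_take_drop.
have u' := u; rewrite e cat_uniq /= in u'.
case/and3P: u' => ut /norP [ni1 ni2] /andP [nd ud].
have -> : (x \in l) = (x \in take i l ++ y :: drop i.+1 l) by rewrite -e.
rewrite !mem_cat inE.
case: (x =P y) => [->|_]; last by rewrite /= andbT.
by rewrite (negbTE ni1) (negbTE nd).
Qed.

Lemma uniq_rem_at (l : seq T) i : uniq l -> uniq (rem_at i l).
Proof.
move=> u; apply: (subseq_uniq _ u); rewrite /rem_at.
rewrite -{3}(cat_take_drop i l); apply: cat_subseq => //.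
by rewrite -add1n -drop_drop drop_subseq.
Qed.

Lemma size_rem_at (l : seq T) i : i < size l -> size (rem_at i l) = (size l).-1.
Proof.
move=> lt; rewrite /rem_at size_cat size_take size_drop lt.
by case: (size l) lt => // n; rewrite ltnS => h; rewrite subSS; lia.
Qed.


Lemma sub_rem_at (X : seq T) (S : set T) : uniq X -> 0 < size X -> S `<=` ls X ->
  nset (size X).-1 S -> exists2 i, i < size X & S = ls (rem_at i X).
Proof.
move=> uX pos sub ns; have eS := ls_filt sub.
have usl : uniq (filt S X) by rewrite filter_uniq.
have szl : size (filt S X) = (size X).-1 by apply: nset_size => //; rewrite -eS.
have [x xX xn] : exists2 x, x \in X & x \notin filt S X.
  apply/allPn; apply: contraT; rewrite negbK => /allP h.
  have : size X <= size (filt S X) by apply: uniq_leq_size.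
  by rewrite szl => hh; lia.
set i := index x X.
have ilt : i < size X by rewrite /i index_mem.
have nx : nth x X i = x by rewrite nth_index.
have sub2 : {subset filt S X <= rem_at i X}.
  move=> y yl; rewrite mem_rem_at // (set_nth_default x) // nx.
  have yX : y \in X by move: yl; rewrite mem_filter => /andP[].
  by rewrite yX /=; apply: contraNneq xn => <-.
have [_ eq2] := uniq_min_size usl sub2 (eq_leq (etrans (size_rem_at ilt) (esym szl))).
by exists i => //; rewrite eS; exact/ls_eqP.
Qed.

Lemma iso_list (X Y : seq T) d : uniq X -> uniq Y -> size X = size Y ->
  exists h : T -> T, [/\ forall i, i < size X -> h (nth d X i) = nth d Y i,
     (forall x y, ls X x -> ls X y -> h x = h y -> x = y) & h @` ls X = ls Y].
Proof.
move=> uX uY sz; exists (fun x => nth d Y (index x X)); split.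
- by move=> i lt; rewrite index_uniq.
- move=> x y xX yX /= e; rewrite -(nth_index d xX) -(nth_index d yX); congr nth.
  have ix : index x X < size Y by rewrite -sz index_mem.
  have iy : index y X < size Y by rewrite -sz index_mem.
  by have := nth_uniq d ix iy uY; rewrite e eqxx => /esym/eqP.
rewrite image_ls; apply/ls_eqP => y; apply/idP/idP.
  by case/mapP=> x xX ->; rewrite mem_nth // -sz index_mem.
move/(nthP d)=> [j jlt <-]; apply/mapP; exists (nth d X j).
  by rewrite mem_nth // sz.
by rewrite index_uniq // sz.
Qed.

Definition ins j (u : T) (l : seq T) := take j l ++ u :: drop j l.

End Gen.
Section Five.
Variables (T : eqType) (e : rel T).

Ltac splitall := repeat match goal with H : is_true (_ && _) |- _ => case/andP: H => ? ? end;
  repeat (apply/andP; split); done.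

Lemma five_N (p q r u v : T) j j' : j < j' -> j' < 4 ->
  sorted e (ins j u [:: p; q; r]) -> sorted e (ins j' v [:: p; q; r]) ->
  [/\ sorted e (ins j'.+1 v (ins j u [:: p; q; r])), size (ins j'.+1 v (ins j u [:: p; q; r])) = 5,
      rem_at j (ins j'.+1 v (ins j u [:: p; q; r])) = ins j' v [:: p; q; r] &
      rem_at j'.+1 (ins j'.+1 v (ins j u [:: p; q; r])) = ins j u [:: p; q; r]].
Proof.
case: j j' => [|[|[|[|j]]]] [|[|[|[|j']]]] //= _ _; rewrite /ins /rem_at /= => h1 h2;
  split => //; rewrite /= ?andbT in h1 h2 *; splitall.
Qed.

Lemma five_A (p q r u v : T) j : j < 4 ->
  sorted e (ins j u [:: p; q; r]) -> sorted e (ins j v [:: p; q; r]) -> e u v ->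
  [/\ sorted e (ins j.+1 v (ins j u [:: p; q; r])), size (ins j.+1 v (ins j u [:: p; q; r])) = 5,
      rem_at j (ins j.+1 v (ins j u [:: p; q; r])) = ins j v [:: p; q; r] &
      rem_at j.+1 (ins j.+1 v (ins j u [:: p; q; r])) = ins j u [:: p; q; r]].
Proof.
case: j => [|[|[|[|j]]]] //= _; rewrite /ins /rem_at /= => h1 h2 h3;
  split => //; rewrite /= ?andbT in h1 h2 *; splitall.
Qed.

End Five.

Section Hyper.
Variable T : eqType.
Variable E : set (set T).
Hypothesis h4 : hypergraph4 E.
Hypothesis hom : le_set_homogeneous E 5.

Lemma aut_comp g k : is_aut E g -> is_aut E k -> is_aut E (k \o g).
Proof.
move=> [bg eg] [bk ek]; split; first exact: bij_comp.
move=> S; rewrite -image_comp; rewrite -ek; exact: eg.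
Qed.

Lemma aut_inv g : is_aut E g -> exists g', [/\ is_aut E g', cancel g g' & cancel g' g].
Proof.
move=> [[g' c1 c2] eg]; exists g'; split => //; split; first by exists g.
move=> S; rewrite (eg (g' @` S)) image_comp (_ : g \o g' = id) ?image_id //.
by apply: funext => x /=; rewrite c2.
Qed.

Lemma aut_inj g : is_aut E g -> injective g.
Proof. by case=> /bij_inj. Qed.

Lemma small_iso (X Y : seq T) (d : T) : uniq X -> uniq Y -> size X = size Y -> size X <= 3 ->
  induced_iso E (ls X) (ls Y).
Proof.
move=> uX uY sz le3; have [h [_ ih im]] := iso_list d uX uY sz.
exists h; split => //; split => // S sub; split => eS; exfalso.
- have := nset_sub (h4 eS) sub; lia.
- have : h @` S `<=` ls Y by rewrite -im; exact: image_subset.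
  move/(nset_sub (h4 eS)); lia.
Qed.

Lemma homog_list (X Y : seq T) : uniq X -> uniq Y -> size X = size Y -> size X <= 5 ->
  induced_iso E (ls X) (ls Y) -> exists g, is_aut E g /\ g @` ls X = ls Y.
Proof.
move=> uX uY sz le5 iso; apply: (hom le5) => //; first exact: nset_ls.
by rewrite sz; exact: nset_ls.
Qed.

Variables x0 y0 : T.
Hypothesis nxy : x0 != y0.
Hypothesis noswap : ~ exists h, [/\ is_aut E h, h x0 = y0 & h y0 = x0].

Definition R u v := exists g, [/\ is_aut E g, g x0 = u & g y0 = v].

Lemma R_neq u v : R u v -> u != v.
Proof.
case=> g [ag <- <-]; apply: contra nxy => /eqP e; apply/eqP; exact: (aut_inj ag).
Qed.

Lemma R_tot u v : u != v -> R u v \/ R v u.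
Proof.
move=> nuv.
have iso : induced_iso E (ls [:: x0; y0]) (ls [:: u; v]).
  by apply: (@small_iso [:: x0; y0] [:: u; v] x0); rewrite /= ?inE ?andbT.
have [g [ag im]] := @homog_list [:: x0; y0] [:: u; v]
   ltac:(by rewrite /= inE andbT) ltac:(by rewrite /= inE andbT) erefl erefl iso.
rewrite image_ls in im; move/ls_eqP: im => e.
have gx : g x0 \in [:: u; v] by rewrite -e inE eqxx.
have gy : g y0 \in [:: u; v] by rewrite -e !inE eqxx orbT.
have ne : g x0 != g y0 by apply: contra nxy => /eqP /(aut_inj ag) ->.
move: gx gy ne; rewrite !inE => /orP[] /eqP gx /orP[] /eqP gy; rewrite gx gy ?eqxx //.
- by move=> _; left; exists g.
- by move=> _; right; exists g.
Qed.

Lemma R_asym u v : R u v -> R v u -> False.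
Proof.
case=> g [ag gx gy] [h [ah hx hy]].
have [g' [ag' c1 c2]] := aut_inv ag.
apply: noswap; exists (g' \o h); split; first exact: aut_comp.
- by rewrite /= hx -gy c1.
- by rewrite /= hy -gx c1.
Qed.

Lemma R_aut k u v : is_aut E k -> R u v -> R (k u) (k v).
Proof. by move=> ak [g [ag <- <-]]; exists (k \o g); split => //; exact: aut_comp. Qed.

Lemma R_autE k u v : is_aut E k -> R (k u) (k v) <-> R u v.
Proof.
move=> ak; split; last exact: R_aut.
have [k' [ak' c1 c2]] := aut_inv ak.
by move/(R_aut ak'); rewrite !c1.
Qed.

Lemma no_src u v w : R u v -> R v w -> R w u -> forall p q r, uniq [:: p; q; r] ->
  (R p q -> R p r -> False) /\ (R q p -> R r p -> False).
Proof.
move=> Huv Hvw Hwu p q r upqr.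
have uuvw : uniq [:: u; v; w].
  rewrite /= !inE !negb_or (R_neq Huv) (R_neq Hvw) eq_sym (R_neq Hwu) //.
have iso : induced_iso E (ls [:: u; v; w]) (ls [:: p; q; r]).
  by apply: (@small_iso [:: u; v; w] [:: p; q; r] u).
have [g [ag im]] := @homog_list [:: u; v; w] [:: p; q; r] uuvw upqr erefl erefl iso.
rewrite image_ls in im; move/ls_eqP: im => e.
have pre z : z \in [:: p; q; r] -> exists2 a, a \in [:: u; v; w] & z = g a.
  by rewrite -e => /mapP.
have [a ha ep] := pre p ltac:(by rewrite !inE eqxx).
have [b hb eq] := pre q ltac:(by rewrite !inE eqxx ?orbT).
have [c hc er] := pre r ltac:(by rewrite !inE eqxx ?orbT).
subst p q r.
move: upqr; rewrite !(R_autE _ _ ag) /= !inE !negb_or andbT => /andP[/andP[nab nac] nbc].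
have nab' : a != b by apply: contra nab => /eqP ->.
have nac' : a != c by apply: contra nac => /eqP ->.
have nbc' : b != c by apply: contra nbc => /eqP ->.
move: nab' nac' nbc'.
move: ha hb hc; rewrite !inE => /or3P[]/eqP-> /or3P[]/eqP-> /or3P[]/eqP->; rewrite ?eqxx //= => _ _ _;
  split => h1 h2; solve [ exact: R_asym h1 Huv | exact: R_asym h1 Hvw | exact: R_asym h1 Hwu
   | exact: R_asym h2 Huv | exact: R_asym h2 Hvw | exact: R_asym h2 Hwu
   | exact: R_asym Huv h1 | exact: R_asym Hvw h1 | exact: R_asym Hwu h1
   | exact: R_asym Huv h2 | exact: R_asym Hvw h2 | exact: R_asym Hwu h2 ].
Qed.

Variables a1 a2 a3 a4 : T.
Hypothesis ua : uniq [:: a1; a2; a3; a4].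

Lemma R_trans u v w : R u v -> R v w -> R u w.
Proof.
move=> Huv Hvw; case: (R_tot (_ : u != w)) => // [|Hwu].
  by apply/eqP => e; subst w; exact: R_asym Huv Hvw.
have ns := no_src Huv Hvw Hwu.
move: ua; rewrite /= !inE !negb_or => /andP[/and3P[n12 n13 n14] /andP[/andP[n23 n24] /andP[n34 _]]].
have u3 (p q r : T) : p != q -> p != r -> q != r -> uniq [:: p; q; r].
  by move=> pq pr qr; rewrite /= !inE !negb_or pq pr qr.
case: (R_tot n12) => h2; case: (R_tot n13) => h3; case: (R_tot n14) => h4'.
all: exfalso.
- exact: (proj1 (ns _ _ _ (u3 _ _ _ n12 n13 n23)) h2 h3).
- exact: (proj1 (ns _ _ _ (u3 _ _ _ n12 n13 n23)) h2 h3).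
- exact: (proj1 (ns _ _ _ (u3 _ _ _ n12 n14 n24)) h2 h4').
- exact: (proj2 (ns _ _ _ (u3 _ _ _ n13 n14 n34)) h3 h4').
- exact: (proj1 (ns _ _ _ (u3 _ _ _ n13 n14 n34)) h3 h4').
- exact: (proj2 (ns _ _ _ (u3 _ _ _ n12 n14 n24)) h2 h4').
- exact: (proj2 (ns _ _ _ (u3 _ _ _ n12 n13 n23)) h2 h3).
- exact: (proj2 (ns _ _ _ (u3 _ _ _ n12 n13 n23)) h2 h3).
Qed.

Definition tau z := if z == x0 then y0 else if z == y0 then x0 else z.

Lemma tauK : cancel tau tau.
Proof.
move=> z; rewrite /tau; case: (z =P x0) => [->|nx]; first by rewrite eq_sym (negbTE nxy) eqxx.
case: (z =P y0) => [->|ny]; first by rewrite eqxx.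
by move/eqP/negbTE: nx => ->; move/eqP/negbTE: ny => ->.
Qed.

Lemma tau_img S : tau @` (tau @` S) = S.
Proof.
rewrite image_comp (_ : tau \o tau = id) ?image_id //; apply: funext => z /=; exact: tauK.
Qed.

Lemma tau_aut_E : (forall S, E S <-> nset 4 S) \/ (forall S, ~ E S) -> False.
Proof.
have inj : injective tau := can_inj tauK.
move=> H; apply: noswap; exists tau; split.
- split; first by exists tau; exact: tauK.
  move=> S; case: H => H.
    rewrite !H; split; first by apply: nset_image => x y _ _; exact: inj.
    by move=> h; rewrite -(tau_img S); apply: nset_image => // x y _ _; exact: inj.
  by split => h; exfalso; exact: (H _ h).
- by rewrite /tau eqxx.
- by rewrite /tau eq_sym (negbTE nxy) eqxx.
Qed.

Lemma edge_nonedge (b : bool) : exists S, nset 4 S /\ (E S <-> b).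
Proof.
case: (pselect (exists S, nset 4 S /\ (E S <-> b))) => // hn; exfalso.
apply: tau_aut_E; case: b hn => hn.
- right => S eS; apply: hn; exists S; split => //; exact: h4.
- left => S; split; first exact: h4.
  move=> nS; case: (pselect (E S)) => // neS; exfalso; apply: hn; exists S; split => //.
Qed.

Definition Rb : rel T := fun u v => `[< R u v >].

Lemma Rb_trans : transitive Rb.
Proof. by move=> b a c /asboolP h1 /asboolP h2; apply/asboolP; exact: R_trans h1 h2. Qed.

Lemma Rb_irr : irreflexive Rb.
Proof. by move=> a; apply/asboolP => h; have := R_neq h; rewrite eqxx. Qed.

Lemma Rb_aut g : is_aut E g -> {homo g : x y / Rb x y >-> Rb x y}.
Proof. by move=> ag x y /asboolP h; apply/asboolP; exact: R_aut. Qed.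

Lemma Rb_tot u v : u != v -> Rb u v || Rb v u.
Proof. by move/R_tot => [h|h]; apply/orP; [left|right]; apply/asboolP. Qed.

Definition leR : rel T := fun a b => (a == b) || Rb a b.

Lemma sort_exists (l : seq T) : uniq l -> exists w, [/\ sorted Rb w, w =i l & size w = size l].
Proof.
move=> ul; exists (sort leR l).
have pe : perm_eq (sort leR l) l by rewrite perm_sort.
have us : uniq (sort leR l) by rewrite (perm_uniq pe).
split; [|exact: perm_mem|exact: perm_size].
have : sorted leR (sort leR l).
  apply: sort_sorted => a b; rewrite /leR; case: (a =P b) => [->|/eqP nab]; first by rewrite eqxx.
  by rewrite /= eq_sym (negbTE nab) /=; exact: Rb_tot.
move: us; elim: (sort leR l) => // x t IH; case: t IH => // y t IH /= /andP [nx u] /andP [lexy pth].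
apply/andP; split; last exact: IH.
move: lexy; rewrite /leR; case: (x =P y) => [e|]; last by [].
by move: nx; rewrite e inE eqxx.
Qed.

Lemma sorted_map_eq g (X Y : seq T) : is_aut E g -> sorted Rb X -> sorted Rb Y ->
  g @` ls X = ls Y -> map g X = Y.
Proof.
move=> ag sX sY; rewrite image_ls => /ls_eqP e.
apply: (irr_sorted_eq Rb_trans Rb_irr) => //; exact: homo_sorted (Rb_aut ag) _ sX.
Qed.


Lemma ext (p q r : T) j (s : bool) : Rb p q -> Rb q r -> j < 4 ->
  exists u, sorted Rb (ins j u [:: p; q; r]) /\ (E (ls (ins j u [:: p; q; r])) <-> s).
Proof.
move=> pq qr jlt.
have [S [nS eS]] := edge_nonedge s.
have [l [ul szl eSl]] := nset_list nS.
have [w [sw ew szw]] := sort_exists ul.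
have uw : uniq w := sorted_uniq Rb_trans Rb_irr sw.
have Sw : S = ls w by rewrite eSl; apply/ls_eqP => x; rewrite ew.
have jw : j < size w by rewrite szw szl.
set t := rem_at j w.
have st : sorted Rb t by apply: (subseq_sorted Rb_trans _ sw); rewrite /t /rem_at -{3}(cat_take_drop j w);
  apply: cat_subseq => //; rewrite -add1n -drop_drop drop_subseq.
have ut : uniq t := uniq_rem_at j uw.
have szt : size t = 3 by rewrite size_rem_at // szw szl.
have spqr : sorted Rb [:: p; q; r] by rewrite /= pq qr.
have upqr : uniq [:: p; q; r] := sorted_uniq Rb_trans Rb_irr spqr.
have iso : induced_iso E (ls t) (ls [:: p; q; r]).
  by apply: (@small_iso t [:: p; q; r] x0) => //; rewrite szt.
have [g [ag im]] := @homog_list t [:: p; q; r] ut upqr ltac:(by rewrite szt) ltac:(by rewrite szt) iso.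
have mt := sorted_map_eq ag st spqr im.
exists (g (nth x0 w j)).
have ew2 : w = take j w ++ nth x0 w j :: drop j.+1 w by rewrite -drop_nth // cat_take_drop.
have -> : ins j (g (nth x0 w j)) [:: p; q; r] = map g w.
  rewrite /ins -mt /t /rem_at map_cat take_size_cat ?drop_size_cat ?size_map ?size_take ?jw //.
  by rewrite [in RHS]ew2 map_cat.
split; first exact: homo_sorted (Rb_aut ag) _ sw.
by rewrite -image_ls -(proj2 ag) -Sw.
Qed.

Lemma asb_iff (P : Prop) (b : bool) : (P <-> b) -> `[< P >] = b.
Proof. by case: b => h; [apply: asboolT; exact/h | apply: asboolF => /h]. Qed.

Lemma asb_eq (P Q : Prop) : `[< P >] = `[< Q >] -> (P <-> Q).
Proof. by move=> e; split => h; apply/asboolP; [rewrite -e | rewrite e]; apply/asboolP. Qed.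

Definition pat (X : seq T) i : bool := `[< E (ls (rem_at i X)) >].
Definition mask (X : seq T) : nat :=
  pat X 0 + 2 * (pat X 1 + 2 * (pat X 2 + 2 * (pat X 3 + 2 * pat X 4))).

Lemma mask_gen (b0 b1 b2 b3 b4 : bool) i : i < 5 ->
  bitn (b0 + 2 * (b1 + 2 * (b2 + 2 * (b3 + 2 * b4)))) i = nth false [:: b0; b1; b2; b3; b4] i.
Proof.
by case: b0; case: b1; case: b2; case: b3; case: b4; case: i => [|[|[|[|[|]]]]].
Qed.

Lemma mask_gen_lt (b0 b1 b2 b3 b4 : bool) : b0 + 2 * (b1 + 2 * (b2 + 2 * (b3 + 2 * b4))) < 32.
Proof. by case: b0; case: b1; case: b2; case: b3; case: b4. Qed.

Lemma bitn_mask X i : i < 5 -> bitn (mask X) i = pat X i.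
Proof. by move=> lt; rewrite /mask mask_gen //; case: i lt => [|[|[|[|[|]]]]]. Qed.

Lemma mask_lt X : mask X < 32.
Proof. exact: mask_gen_lt. Qed.

Lemma map_rem_at (g : T -> T) i X : map g (rem_at i X) = rem_at i (map g X).
Proof. by rewrite /rem_at map_cat map_take map_drop. Qed.

Lemma patG X Y : sorted Rb X -> sorted Rb Y -> size X = 5 -> size Y = 5 ->
  popc (mask X) = popc (mask Y) -> mask X = mask Y.
Proof.
move=> sX sY szX szY e.
have [s ps hs] := perm_exists (mask_lt X) (mask_lt Y) e.
have szs : size s = 5 by rewrite (perm_size ps) size_iota.
have s_lt i : i < 5 -> nth 0 s i < 5.
  move=> lt; have : nth 0 s i \in iota 0 5 by rewrite -(perm_mem ps) mem_nth // szs.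
  by rewrite mem_iota.
have hs' i : i < 5 -> pat Y (nth 0 s i) = pat X i.
  by move=> lt; rewrite -bitn_mask ?s_lt // -bitn_mask // hs.
have uX := sorted_uniq Rb_trans Rb_irr sX.
have uY := sorted_uniq Rb_trans Rb_irr sY.
set l' := map (nth x0 Y) s.
have pl : perm_eq l' Y.
  have e2 : map (nth x0 Y) (iota 0 5) = Y by rewrite -szY; exact: (mkseq_nth x0 Y).
  by rewrite -[X in perm_eq _ X]e2; apply: perm_map.
have ul' : uniq l' by rewrite (perm_uniq pl).
have szl' : size X = size l' by rewrite size_map szs.
have [h [hn hinj him]] := iso_list x0 uX ul' szl'.
have mh : map h X = l'.
  apply: (@eq_from_nth _ x0); first by rewrite size_map.
  by move=> i; rewrite size_map => lt; rewrite (nth_map x0) // hn.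
have img i : i < 5 -> h @` ls (rem_at i X) = ls (rem_at (nth 0 s i) Y).
  move=> lt; rewrite image_ls map_rem_at mh; apply/ls_eqP => x.
  rewrite mem_rem_at // ?(size_map, szs) // mem_rem_at ?szY ?s_lt //.
  by rewrite (perm_mem pl) (set_nth_default x0) ?(size_map, szs) // (nth_map 0) ?szs // (set_nth_default x0) ?szY ?s_lt.
have key S : S `<=` ls X -> nset 4 S -> (E S <-> E (h @` S)).
  move=> sub ns; have [i lt ->] := sub_rem_at uX ltac:(by rewrite szX) sub ltac:(by rewrite szX).
  rewrite szX in lt; rewrite img //; apply: asb_eq; rewrite -/(pat X i) -/(pat Y (nth 0 s i)).
  by rewrite hs'.
have iso : induced_iso E (ls X) (ls Y).
  exists h; split => //; split; first by rewrite him; apply/ls_eqP; exact: perm_mem.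
  move=> S sub; split => H; first exact: (proj1 (key S sub (h4 H)) H).
  suff ns : nset 4 S by exact: (proj2 (key S sub ns) H).
  have eS := ls_filt sub.
  have ufm : uniq (map h (filt S X)).
    rewrite map_inj_in_uniq ?filter_uniq // => x y.
    rewrite !mem_filter => /andP [_ xX] /andP [_ yX]; exact: hinj.
  have := h4 H; rewrite eS image_ls => /(nset_size ufm); rewrite size_map => <-.
  by apply: nset_ls; rewrite filter_uniq.
have [g [ag im]] := homog_list uX uY ltac:(by rewrite szX szY) ltac:(by rewrite szX) iso.
have mg := sorted_map_eq ag sX sY im.
have pe i : pat Y i = pat X i.
  rewrite /pat -mg -map_rem_at -image_ls; apply: asb_iff.
  by rewrite -(proj2 ag); split => h'; apply/asboolP.
by rewrite /mask !pe.
Qed.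

Definition Real P := exists X, [/\ sorted Rb X, size X = 5 & P = mask X].

Lemma triple : exists p q r, Rb p q /\ Rb q r.
Proof.
have u3 : uniq [:: a1; a2; a3].
  move: ua; rewrite /= !inE !negb_or => /andP[/and3P[-> -> _] /andP[/andP[-> _] _]] //.
have [w [sw ew szw]] := sort_exists u3.
case: w sw ew szw => [|p [|q [|r [|? ?]]]] //= /andP [pq /andP [qr _]] _ _.
by exists p, q, r.
Qed.

Lemma bit_of (L : seq T) a (l : seq T) (b : bool) : a < 5 -> rem_at a L = l ->
  (E (ls l) <-> b) -> bitn (mask L) a = b.
Proof. by move=> lt e h; rewrite bitn_mask // /pat e; apply: asb_iff. Qed.

Lemma final_contra : False.
Proof.
have [p [q [r [pq qr]]]] := triple.
apply: (@finite_contra Real).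
- by move=> P [X [_ _ ->]]; exact: mask_lt.
- by move=> P Q [X [sX szX ->]] [Y [sY szY ->]]; exact: patG.
- move=> a b hab hb s.
  have ja4 : a < 4 by lia.
  have b4 : b.-1 < 4 by lia.
  have [u [su eu]] := ext (~~ s) pq qr ja4.
  have [v [sv ev]] := ext s pq qr b4.
  have ab : a < b.-1 by lia.
  have [sL szL e1 e2] := five_N ab b4 su sv.
  exists (mask (ins (b.-1).+1 v (ins a u [:: p; q; r]))); split.
  + by eexists; split; [exact: sL | exact: szL | ].
  + exact: bit_of (ltn_trans ja4 (ltnSn 4)) e1 ev.
  + have eb : b = (b.-1).+1 by lia.
    have hb' : (b.-1).+1 < 5 by lia.
    by rewrite [X in bitn _ X]eb; exact: bit_of hb' e2 eu.
- move=> a ja4.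
  have [u [su eu]] := ext true pq qr ja4.
  have [v [sv ev]] := ext false pq qr ja4.
  have nuv : u != v.
    by apply/eqP => e; subst v; have := proj1 ev (proj2 eu isT).
  have a5 : a < 5 by lia.
  have a5' : a.+1 < 5 by lia.
  case/orP: (Rb_tot nuv) => h.
  + have [sL szL e1 e2] := five_A ja4 su sv h.
    exists (mask (ins a.+1 v (ins a u [:: p; q; r]))); split.
      by eexists; split; [exact: sL | exact: szL | ].
    by rewrite (bit_of a5 e1 ev) (bit_of a5' e2 eu).
  + have [sL szL e1 e2] := five_A ja4 sv su h.
    exists (mask (ins a.+1 u (ins a v [:: p; q; r]))); split.
      by eexists; split; [exact: sL | exact: szL | ].
    by rewrite (bit_of a5 e1 eu) (bit_of a5' e2 ev).
Qed.

End Hyper.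

Lemma swap_lemma (T : eqType) (E : set (set T)) : hypergraph4 E -> le_set_homogeneous E 5 ->
  forall a1 a2 a3 a4 : T, uniq [:: a1; a2; a3; a4] ->
  forall x0 y0 : T, x0 != y0 -> exists h, [/\ is_aut E h, h x0 = y0 & h y0 = x0].
Proof.
move=> h4 hom a1 a2 a3 a4 ua x0 y0 nxy.
case: (pselect (exists h, [/\ is_aut E h, h x0 = y0 & h y0 = x0])) => // ns.
exfalso; exact: (@final_contra T E h4 hom x0 y0 nxy ns a1 a2 a3 a4 ua).
Qed.

Theorem theoremB (M : Type) (E : set (set M)) :
  countably_infinite M -> hypergraph4 E -> le_set_homogeneous E 5 ->
  aut_two_transitive E.
Proof.
move=> [f bf] h4 hom.
pose E' : set (set {classic M}) := E.
have h4' : hypergraph4 E' := h4.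
have hom' : le_set_homogeneous E' 5 := hom.
have injf : injective f := bij_inj bf.
have ua : uniq [:: (f 0 : {classic M}); f 1; f 2; f 3].
  change (uniq (map (f : nat -> {classic M}) (iota 0 4))).
  by rewrite map_inj_uniq ?iota_uniq.
move=> a b c d hab hcd.
have nab : (a : {classic M}) != b by apply/eqP.
have ncd : (c : {classic M}) != d by apply/eqP.
have iso : induced_iso E' (ls [:: (a : {classic M}); b]) (ls [:: (c : {classic M}); d]).
  by apply: (@small_iso {classic M} E' h4' [:: (a : {classic M}); b] [:: (c : {classic M}); d] a); rewrite /= ?inE ?andbT.
have [g [ag im]] := @homog_list {classic M} E' hom' [:: (a : {classic M}); b] [:: (c : {classic M}); d]
   ltac:(by rewrite /= inE andbT) ltac:(by rewrite /= inE andbT) erefl erefl iso.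
rewrite image_ls in im; move/ls_eqP: im => e.
have ga : g a \in [:: (c : {classic M}); d] by rewrite -e inE eqxx.
have gb : g b \in [:: (c : {classic M}); d] by rewrite -e !inE eqxx orbT.
have ne : g a != g b :> {classic M} by apply: contra nab => /eqP /(aut_inj ag) ->.
have [h [ah hc hd]] := swap_lemma h4' hom' ua ncd.
move: ga gb ne; rewrite !inE => /orP[] /eqP ga /orP[] /eqP gb; rewrite ga gb ?eqxx // => _.
- by exists g.
- exists (h \o g); split; first exact: (@aut_comp {classic M} E').
  by rewrite /= ga gb hd hc.
Qed.
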